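(* Let $x$ be an aperiodic infinite word over a finite alphabet which is the sesquipower induced by a sequence $\{v_n\}_{n=1}^\infty$ of finite words, and suppose $x$ avoids $k$-anti-powers for some integer $k\ge2$. Then there exists a nonempty word $u$ of length at most $k-1$ such that for every $\ell>0$ there is some $n>0$ such that $u^\ell$ is a factor of $v_n$.
   Context: Given a sequence $\{v_n\}_{n=1}^\infty$ of finite words, define $w_1=v_1$ and $w_{n+1}=w_nv_nw_n$; the limit of $\{w_n\}$ is the sesquipower induced by $\{v_n\}$. An infinite word is aperiodic if no suffix of it equals $u^\omega$ for a finite word $u$. A factor is a contiguous subword; $u^\ell$ is $\ell$ concatenated copies of $u$. A $k$-anti-power is a word $w=w_1\cdots w_k$ with $|w_1|=\cdots=|w_k|\ge1$ and $w_1,\dots,w_k$ pairwise distinct; $x$ avoids $k$-anti-powers if none of its factors is a $k$-anti-power. *)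

(* Defs.v *)
From mathcomp Require Import all_boot.
Set Implicit Arguments. Unset Strict Implicit. Unset Printing Implicit Defensive.

Section Words.
Variable A : finType.

(* sesq v k = w_{k+1}, where w_1 = v_1 and w_{n+1} = w_n v_n w_n
   (the sequence v is indexed from 1; v 0 is ignored). *)
Fixpoint sesq (v : nat -> seq A) (k : nat) : seq A :=
  match k with
  | 0 => v 1
  | k'.+1 => sesq v k' ++ v k'.+1 ++ sesq v k'
  end.

Definition prefix_of (w : seq A) (x : nat -> A) : Prop :=
  forall i, i < size w -> x i = nth (x 0) w i.

(* x is the limit of the sequence w_n = sesq v (n-1): every w_n is a prefix
   of x and the lengths are unbounded (so the limit is an infinite word). *)
Definition is_sesquipower (v : nat -> seq A) (x : nat -> A) : Prop :=
  (forall k, prefix_of (sesq v k) x) /\ (forall m, exists k, m <= size (sesq v k)).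

Definition aperiodic (x : nat -> A) : Prop :=
  ~ exists (p : nat) (u : seq A), 0 < size u /\
      forall i, x (p + i) = nth (x 0) u (i %% size u).

Definition factor (x : nat -> A) (i len : nat) : seq A :=
  mkseq (fun t => x (i + t)) len.

Definition anti_power (k : nat) (w : seq A) : Prop :=
  exists m, 0 < m /\ size w = k * m /\
    uniq [seq take m (drop (j * m) w) | j <- iota 0 k].

Definition avoids_anti_powers (k : nat) (x : nat -> A) : Prop :=
  forall i len, ~ anti_power k (factor x i len).

Definition wpow (u : seq A) (l : nat) : seq A := flatten (nseq l u).

End Words.

(* Main.v *)
Require Import Defs.
From mathcomp Require Import all_boot.
From mathcomp Require Import zify.
From Stdlib Require Import Classical.
Set Implicit Arguments. Unset Strict Implicit. Unset Printing Implicit Defensive.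

Definition per (A : Type) (f : nat -> A) (i len q : nat) : Prop :=
  forall t, t < len -> f (i + t) = f (i + t + q).

Lemma per_sub (A : Type) (f : nat -> A) i len len1 q :
  len1 <= len -> per f i len q -> per f i len1 q.
Proof. move=> h H t ht; apply: H; lia. Qed.

Lemma per_iter (A : Type) (f : nat -> A) i len p : 0 < p -> per f i len p ->
  forall c e, e + c * p <= len -> f (i + e + c * p) = f (i + e).
Proof.
move=> p0 H; elim=> [|c IH] e He; first by rewrite mul0n addn0.
have -> : i + e + c.+1 * p = i + (e + c * p) + p by rewrite mulSn; lia.
rewrite -H; last by rewrite mulSn in He; lia.
rewrite addnA IH //; rewrite mulSn in He; lia.
Qed.

Lemma blockeq (A : finType) k (x : nat -> A) : avoids_anti_powers k x ->
  forall i m, 0 < m -> exists a b, a < b /\ b < k /\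
    forall t, t < m -> x (i + a * m + t) = x (i + b * m + t).
Proof.
move=> Hav i m m0.
have [Hu|Hnu] := boolP (uniq [seq take m (drop (j*m) (factor x i (k*m))) | j <- iota 0 k]).
  by exfalso; apply: (Hav i (k*m)); exists m; rewrite /factor size_mkseq.
move/(uniqPn [::]): Hnu => [a [b [ab bs E]]].
rewrite size_map size_iota in bs.
rewrite !(nth_map 0) ?size_iota in E; try lia.
rewrite !nth_iota in E; try lia.
exists a, b; split => //; split => // t tm.
have := congr1 (fun s => nth (x 0) s t) E.
rewrite /= !nth_take // !nth_drop /factor !nth_mkseq; try nia.
by rewrite !addnA !add0n.
Qed.
Lemma s1 (A : finType) k (x : nat -> A) : 2 <= k -> avoids_anti_powers k x ->
  forall M, exists i p, 0 < p /\ p <= k * (k * k).+1 /\ per x i M p.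
Proof.
move=> k2 Hav M.
set B := k * (k * k).+1.
set m0 := M + B + 1.
pose P (m : nat) (ab : 'I_k * 'I_k) : bool :=
  (ab.1 < ab.2) && [forall t : 'I_m, x (ab.1 * m + t) == x (ab.2 * m + t)].
pose h (j : 'I_(k * k).+2) := [pick ab | P (m0 + j) ab].
have Hs : forall j : 'I_(k*k).+2, exists ab, h j = Some ab /\ P (m0 + j) ab.
  move=> j; rewrite /h; case: pickP => [ab Hab|H0]; first by exists ab.
  exfalso; have [a [b [ab [bk Ht]]]] := @blockeq _ _ _ Hav 0 (m0 + j) (ltac:(lia)).
  have ak : a < k by lia.
  have := H0 (Ordinal ak, Ordinal bk); rewrite /P /= ab /=.
  move/negP; apply; apply/forallP => t; apply/eqP.
  by have := Ht t (ltn_ord t); rewrite !add0n.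
have : ~~ injectiveb h.
  apply/negP => /injectiveP inj; have := @leq_card _ _ h inj.
  by rewrite card_option card_prod !card_ord; lia.
move/injectivePn => [j1 [j2 neq eqh]].
wlog lt12 : j1 j2 neq eqh / j1 < j2.
  move=> W; case: (ltngtP j1 j2) => c.
  - exact: (W j1 j2).
  - by apply: (W j2 j1) => //; rewrite eq_sym.
  - by move: neq; rewrite (val_inj c) eqxx.
have [ab [E1 P1]] := Hs j1. have [ab' [E2 P2]] := Hs j2.
move: E2; rewrite -eqh E1 => -[Eab]; subst ab'.
move: P1 P2; rewrite /P => /andP [abl /forallP F1] /andP [_ /forallP F2].
set a := nat_of_ord ab.1 in abl F1 F2.
set b := nat_of_ord ab.2 in abl F1 F2.
set m1 := m0 + j1 in F1. set m2 := m0 + j2 in F2.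
have ak : a < k by apply: ltn_ord.
have bk : b < k by apply: ltn_ord.
have j2b : (j2 : nat) < (k * k).+2 by apply: ltn_ord.
set g := b - a. set d := j2 - j1.
exists (a * m2 + g * m1), (g * d); split; first by rewrite muln_gt0; lia.
split. rewrite /B. have : g <= k by lia. have : d <= (k * k).+1 by lia. nia.
move=> t tM.
have r1 : a * m1 + (a * d + t) < a * m1 + m1.
  have : a * d <= B by rewrite /B; nia. lia.
have l1 : a * d + t < m1 by lia.
have l2 : t < m2 by lia.
have e1 := eqP (F1 (Ordinal l1)).
have e2 := eqP (F2 (Ordinal l2)).
simpl in e1, e2.
have hm2 : m2 = m1 + d by rewrite /m2 /m1 /d; lia.
have hb : b = a + g by rewrite /g; lia.
have -> : a * m2 + g * m1 + t = b * m1 + (a * d + t).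
  rewrite hm2 hb; nia.
rewrite -e1.
have -> : a * m1 + (a * d + t) = a * m2 + t by rewrite hm2; nia.
rewrite e2 hm2 hb; congr x; nia.
Qed.
Lemma s2 (A : finType) k (x : nat -> A) : 2 <= k -> avoids_anti_powers k x ->
  forall i len p len', k <= p -> len' + 2 * k * p.+1 <= len -> per x i len p ->
  exists i' g, 0 < g /\ g < k /\ per x i' len' g.
Proof.
move=> k2 Hav i len p len' kp hl Hp.
have p0 : 0 < p by lia.
have [j [j' [jj [j'k Ht]]]] := @blockeq _ _ _ Hav i p.+1 (ltn0Sn p).
set g := j' - j.
exists (i + j * p.+1), g; split; first lia. split; first lia.
move=> t tl.
have Hit := per_iter p0 Hp.
have ep : t %% p < p by apply: ltn_pmod.
have de := divn_eq t p.
set c := t %/ p in de. set e := t %% p in de ep.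
have hj : j * p.+1 <= k * p.+1 by apply: leq_mul; lia.
have hj' : j' * p.+1 <= k * p.+1 by apply: leq_mul; lia.
have hk2 : k * p.+1 <= 2 * k * p.+1 by rewrite -mulnA leq_pmull.
have E1 : x (i + j * p.+1 + t) = x (i + j * p.+1 + e).
  have H1 := Hit c (j * p.+1 + e) (ltac:(lia)).
  rewrite -addnA -[in RHS]addnA -H1; congr x; lia.
have E2 : x (i + j * p.+1 + t + g) = x (i + j * p.+1 + e + g).
  have H1 := Hit c (j * p.+1 + e + g) (ltac:(rewrite /g; lia)).
  have -> : i + j * p.+1 + e + g = i + (j * p.+1 + e + g) by lia.
  rewrite -H1; congr x; lia.
rewrite E1 E2 (Ht e (ltac:(lia))).
have -> : i + j' * p.+1 + e = i + (j * p.+1 + e + g) + g * p.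
  rewrite /g; have -> : j' = j + (j' - j) by lia. nia.
rewrite Hit; last by rewrite /g; lia.
congr x; lia.
Qed.
Definition nopd (A : Type) (d : A) (s : seq A) (q : nat) : Prop :=
  exists t, t + q < size s /\ nth d s t <> nth d s (t + q).

Lemma sesqS (A : finType) (v : nat -> seq A) n :
  sesq v n.+1 = sesq v n ++ v n.+1 ++ sesq v n.
Proof. by []. Qed.

Lemma sesq_prefix (A : finType) (v : nat -> seq A) J d0 :
  exists s1 s2, sesq v (J + d0) = sesq v J ++ s1 /\ sesq v (J + d0) = s2 ++ sesq v J.
Proof.
elim: d0 => [|d0 [s1 [s2 [E1 E2]]]]; first by exists [::], [::]; rewrite addn0 cats0.
rewrite addnS sesqS.
exists (s1 ++ v (J + d0).+1 ++ sesq v (J + d0)), (sesq v (J + d0) ++ v (J + d0).+1 ++ s2).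
split; first by rewrite {1}E1 -catA.
by rewrite {2}E2 !catA.
Qed.

Lemma sesq_prefix' (A : finType) (v : nat -> seq A) N N' : N <= N' ->
  exists s1, sesq v N' = sesq v N ++ s1.
Proof.
move=> h; have [s1 [s2 [E1 _]]] := sesq_prefix v N (N' - N).
by exists s1; rewrite -E1 subnKC.
Qed.

Lemma nopd_mono (A : finType) (v : nat -> seq A) d N N' q : N <= N' ->
  nopd d (sesq v N) q -> nopd d (sesq v N') q.
Proof.
move=> h [t [ht hn]]; have [s1 E] := sesq_prefix' v h.
exists t; rewrite E size_cat !nth_cat; split; first lia.
by rewrite ifT ?ifT //; lia.
Qed.

Lemma exists_nopd (A : finType) (v : nat -> seq A) x :
  is_sesquipower v x -> aperiodic x -> forall q, 0 < q -> exists N, nopd (x 0) (sesq v N) q.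
Proof.
move=> [Hpre Hsz] Hap q q0; apply: NNPP => H.
have Hall : forall t, x t = x (t + q).
  move=> t; have [N HN] := Hsz (t + q).+1.
  apply: NNPP => Hne; apply: H; exists N; exists t; split; first lia.
  by rewrite -!Hpre //; lia.
have Hc : forall c e, x (c * q + e) = x e.
  elim=> [|c IH] e; first by rewrite mul0n add0n.
  by rewrite mulSn -(IH e) (Hall (c * q + e)); congr x; lia.
apply: Hap; exists 0, (mkseq x q); rewrite size_mkseq; split => // i.
by rewrite nth_mkseq ?ltn_pmod // add0n {1}(divn_eq i q) Hc.
Qed.

Lemma exists_J (A : finType) (v : nat -> seq A) x :
  is_sesquipower v x -> aperiodic x -> forall K, exists J,
    forall q, 0 < q -> q <= K -> nopd (x 0) (sesq v J) q.
Proof.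
move=> Hs Ha; elim=> [|K [J1 HJ1]]; first by exists 0 => q; lia.
have [N2 HN2] := exists_nopd Hs Ha (ltn0Sn K).
exists (maxn J1 N2) => q q0 qK.
case: (ltngtP q K.+1) => c.
- apply: (nopd_mono (N := J1)); first exact: leq_maxl. apply: HJ1; lia.
- lia.
- rewrite c; apply: (nopd_mono (N := N2)) => //; exact: leq_maxr.
Qed.
Lemma nth_left (A : Type) (d : A) (W r : seq A) z : z < size W -> nth d (W ++ r) z = nth d W z.
Proof. by move=> h; rewrite nth_cat h. Qed.

Lemma nth_mid (A : Type) (d : A) (W u W2 : seq A) z : z < size u ->
  nth d (W ++ u ++ W2) (size W + z) = nth d u z.
Proof. by move=> h; rewrite nth_cat ltnNge leq_addr /= addKn nth_cat h. Qed.

Lemma nth_right (A : Type) (d : A) (W u W2 : seq A) z :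
  nth d (W ++ u ++ W2) (size W + size u + z) = nth d W2 z.
Proof.
rewrite nth_cat ltnNge -addnA leq_addr /= addKn nth_cat ltnNge leq_addr /=.
by rewrite addKn.
Qed.

Lemma locate (A : finType) (v : nat -> seq A) (d : A) J q : 0 < q ->
  nopd d (sesq v J) q -> forall d0 i len,
  i + len + q <= size (sesq v (J + d0)) -> per (nth d (sesq v (J + d0))) i len q ->
  2 * size (sesq v J) < len ->
  exists n i', 0 < n /\ i' + (len - 2 * size (sesq v J)) + q <= size (v n) /\
    per (nth d (v n)) i' (len - 2 * size (sesq v J)) q.
Proof.
move=> q0 [t0 [t0q hne]].
set LJ := size (sesq v J) in t0q *.
elim=> [|d0 IH] i len.
  by rewrite addn0 -/LJ; lia.
have [s1 [s2 [E1 E2]]] := sesq_prefix v J d0.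
rewrite addnS sesqS.
set W := sesq v (J + d0) in IH E1 E2 *.
set u := v (J + d0).+1.
move=> hsz Hp hlen.
have sW : size W = size s2 + LJ by rewrite E2 size_cat.
have sW' : size W = LJ + size s1 by rewrite E1 size_cat.
rewrite !size_cat in hsz.
case: (leqP (i + len + q) (size W)) => c1.
  apply: (IH i len c1 _ hlen). move=> t tl.
  have := Hp t tl; rewrite !nth_left //; lia.
case: (leqP (size W + size u) i) => c2.
  apply: (IH (i - (size W + size u))) => //; first lia.
  move=> t tl.
  have := Hp t tl.
  have -> : i + t = size W + size u + (i - (size W + size u) + t) by lia.
  have -> : size W + size u + (i - (size W + size u) + t) + q
          = size W + size u + (i - (size W + size u) + t + q) by lia.
  by rewrite !nth_right.
have c3 : size W < i + LJ.
  rewrite ltnNge; apply/negP => c3; apply: hne.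
  have e1 : nth d (sesq v J) t0 = nth d (W ++ u ++ W) (size s2 + t0).
    rewrite nth_left; last lia.
    by rewrite [in RHS]E2 nth_cat ltnNge leq_addr /= addKn.
  have e2 : nth d (sesq v J) (t0 + q) = nth d (W ++ u ++ W) (size s2 + t0 + q).
    rewrite nth_left; last lia.
    by rewrite [in RHS]E2 nth_cat ltnNge -addnA leq_addr /= addKn.
  rewrite e1 e2.
  have := Hp (size s2 + t0 - i) (ltac:(lia)).
  by have -> : i + (size s2 + t0 - i) = size s2 + t0 by lia.
have c4 : i + len + q < size W + size u + LJ.
  rewrite ltnNge; apply/negP => c4; apply: hne.
  have e1 : nth d (sesq v J) t0 = nth d (W ++ u ++ W) (size W + size u + t0).
    rewrite nth_right E1 nth_left //; lia.
  have e2 : nth d (sesq v J) (t0 + q) = nth d (W ++ u ++ W) (size W + size u + (t0 + q)).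
    by rewrite nth_right E1 nth_left //; lia.
  rewrite e1 e2.
  have := Hp (size W + size u + t0 - i) (ltac:(lia)).
  have -> : i + (size W + size u + t0 - i) = size W + size u + t0 by lia.
  by rewrite addnA.
exists (J + d0).+1, (i - size W); split => //; split; first by rewrite -/u; lia.
move=> t tl.
have := Hp (size W + (i - size W) + t - i) (ltac:(lia)).
have -> : i + (size W + (i - size W) + t - i) = size W + (i - size W + t) by lia.
have -> : size W + (i - size W + t) + q = size W + (i - size W + t + q) by lia.
rewrite !nth_mid //; lia.
Qed.
Lemma wpowS (A : finType) (u : seq A) l : wpow u l.+1 = u ++ wpow u l.
Proof. by []. Qed.

Lemma size_wpow (A : finType) (u : seq A) l : size (wpow u l) = l * size u.
Proof. by elim: l => [|l IH] //; rewrite wpowS size_cat IH mulSn. Qed.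

Lemma nth_wpow (A : finType) (d : A) (u : seq A) l t : 0 < size u -> t < l * size u ->
  nth d (wpow u l) t = nth d u (t %% size u).
Proof.
move=> u0; elim: l t => [|l IH] t; first by rewrite mul0n.
move=> ht; rewrite wpowS nth_cat.
case: ifP => h; first by rewrite modn_small.
rewrite IH; last by rewrite mulSn in ht; lia.
have hs : size u <= t by lia.
by rewrite -{2}(subnK hs) modnDr.
Qed.

Lemma wpow_infix (A : finType) (d : A) (s : seq A) i len q l : 0 < q ->
  i + len + q <= size s -> per (nth d s) i len q -> l * q <= len ->
  infix (wpow (take q (drop i s)) l) s.
Proof.
move=> q0 hs Hp hl.
have su : size (take q (drop i s)) = q by rewrite size_takel // size_drop; lia.
have -> : wpow (take q (drop i s)) l = take (l * q) (drop i s).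
  apply: (@eq_from_nth _ d).
    by rewrite size_wpow su size_takel // size_drop; lia.
  move=> t; rewrite size_wpow su => ht.
  rewrite nth_wpow ?su // nth_take; last exact: ltn_pmod.
  rewrite nth_take // !nth_drop.
  have Hit := per_iter q0 Hp.
  have de := divn_eq t q.
  rewrite -(Hit (t %/ q) (t %% q)); last by lia.
  congr nth; lia.
apply/infixP; exists (take i s), (drop (l * q) (drop i s)).
by rewrite cat_take_drop cat_take_drop.
Qed.

Fixpoint allwords (A : finType) (n : nat) : seq (seq A) :=
  if n is n'.+1 then [seq a :: w | a <- enum A, w <- allwords A n'] else [:: [::]].

Lemma mem_allwords (A : finType) (w : seq A) : w \in allwords A (size w).
Proof.
elim: w => [|a w IH] /=; first by rewrite inE.
by apply/allpairsP; exists (a, w); split => //=; rewrite mem_enum.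
Qed.

Lemma pigeon (T : eqType) (S : seq T) (G : T -> nat -> Prop) :
  (forall u l l', l' <= l -> G u l -> G u l') ->
  (forall l, exists u, u \in S /\ G u l) -> exists u, forall l, G u l.
Proof.
move=> mono H; apply: NNPP => Hn.
have Hb : forall s : seq T, exists B, forall u, u \in s -> ~ G u B.
  elim=> [|a s [B HB]]; first by exists 0.
  have [la Hla] : exists la, ~ G a la.
    apply: NNPP => H'; apply: Hn; exists a => l; apply: NNPP => H''; apply: H'; by exists l.
  exists (maxn la B) => u; rewrite inE => /orP [/eqP ->|us] HG.
    by apply: Hla; apply: mono HG; exact: leq_maxl.
  by apply: (HB u us); apply: mono HG; exact: leq_maxr.
have [B HB] := Hb S. have [u [uS Gu]] := H B. exact: HB u uS Gu.
Qed.
Theorem theorem4p14 (A : finType) (v : nat -> seq A) (x : nat -> A) (k : nat) :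
  2 <= k ->
  aperiodic x ->
  is_sesquipower v x ->
  avoids_anti_powers k x ->
  exists u : seq A, 0 < size u /\ size u <= k - 1 /\
    forall l, 0 < l -> exists n, 0 < n /\ infix (wpow u l) (v n).
Proof.
move=> k2 Hap Hseq Hav.
have [J HJ] := exists_J Hseq Hap (k - 1).
set LJ := size (sesq v J).
pose G (u : seq A) l := 0 < size u /\ size u <= k - 1 /\
  forall l', 0 < l' <= l -> exists n, 0 < n /\ infix (wpow u l') (v n).
have mono : forall u l l', l' <= l -> G u l -> G u l'.
  move=> u l l' h [h1 [h2 h3]]; split=> //; split=> // l'' hl; apply: h3; lia.
have Hall : forall l, exists u, u \in flatten [seq allwords A q | q <- iota 0 k] /\ G u l.
  move=> l.
  set Len := l * k + 2 * LJ + 1.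
  have [i [q [q0 [qk Hper]]]] : exists i q, 0 < q /\ q < k /\ per x i Len q.
    set B := k * (k * k).+1.
    have [i0 [p [p0 [pB Hp]]]] := s1 k2 Hav (Len + 2 * k * B.+1).
    case: (ltnP p k) => pk.
      exists i0, p; split => //; split => //; apply: per_sub Hp; lia.
    apply: (@s2 _ _ _ k2 Hav i0 (Len + 2 * k * B.+1) p Len) => //.
    have : 2 * k * p.+1 <= 2 * k * B.+1 by apply: leq_mul => //.
    lia.
  have [N0 HN0] := Hseq.2 (i + Len + q).
  have [s1' E] := @sesq_prefix' _ v N0 (J + N0) (leq_addl J N0).
  have hsz : i + Len + q <= size (sesq v (J + N0)) by rewrite E size_cat; lia.
  have Hpre := Hseq.1 (J + N0); rewrite /prefix_of in Hpre.
  have Hp' : per (nth (x 0) (sesq v (J + N0))) i Len q.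
    move=> t tl; rewrite -!Hpre; try lia. exact: Hper.
  have HJq : nopd (x 0) (sesq v J) q by apply: HJ; lia.
  have [n [i' [n0 [hb Hv]]]] := locate q0 HJq hsz Hp' (ltac:(rewrite /Len; lia)).
  exists (take q (drop i' (v n))).
  have su : size (take q (drop i' (v n))) = q by rewrite size_takel // size_drop; lia.
  split.
    apply/flattenP; exists (allwords A q).
      by apply/mapP; exists q => //; rewrite mem_iota; lia.
    by have := mem_allwords (take q (drop i' (v n))); rewrite su.
  rewrite /G su; split; first lia. split; first lia.
  move=> l' hl'; exists n; split => //; apply: (wpow_infix q0 hb Hv).
  rewrite /LJ /Len.
  have : l' * q <= l * k by apply: leq_mul; lia.
  lia.
have [u Hu] := pigeon mono Hall.
have [h1 [h2 _]] := Hu 1.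
exists u; split => //; split => // l l0.
have [_ [_ H3]] := Hu l. apply: H3; lia.
Qed.
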